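(* Let $N=p^n$ with $p\ge5$ prime and $n\ge2$. Let $\mathbf{s}$ be a Zadoff–Chu sequence of length $N$ and let $\pi(x)=f_2x^2+f_1x+f_0$ be a quadratic permutation polynomial over $\mathbb{Z}_N$ (with $f_2\ne0$ in $\mathbb{Z}_N$). Then the CAZAC sequences $\mathbf{s}\circ\pi$ and $\mathbf{s}\circ\pi^{-1}$ are both inequivalent to ZC sequences, i.e., neither lies in the equivalence class of any Zadoff–Chu sequence of length $N$.
   Context: $\xi_N=e^{-2\pi\sqrt{-1}/N}$, $\xi_N^{x/2}=e^{-\pi\sqrt{-1}x/N}$. A Zadoff–Chu sequence of length $N$ is $s(k)=\xi_N^{u(k^2+(N\bmod2)k+2lk)/2}$, $0\le k<N$, with $\gcd(u,N)=1$, $l$ an integer. A permutation polynomial over $\mathbb{Z}_N$ induces a bijection $k\mapsto \pi(k)\bmod N$ of $\mathbb{Z}_N$; $\pi^{-1}$ is the inverse permutation; $(\mathbf{s}\circ\sigma)(k)=s(\sigma(k))$. The equivalence class of a length-$N$ sequence $\mathbf{x}$ is the set of all sequences obtained from $\mathbf{x}$ by composing the operations: rotation $y(k)=c\,x(k)$ with $|c|=1$; translation $y(k)=x(k+d\bmod N)$ for an integer $d$; decimation $y(k)=x(ak\bmod N)$ with $\gcd(a,N)=1$; linear frequency modulation $y(k)=\xi_N^{lk}x(k)$ for an integer $l$; conjugation $y(k)=x^*(k)$. *)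

(* Defs.v *)
From HB Require Import structures.
From mathcomp Require Import all_boot all_order all_algebra.
From mathcomp Require Import complex.
From mathcomp Require Import reals trigo.

Set Implicit Arguments.
Unset Strict Implicit.
Unset Printing Implicit Defensive.

Import Order.TTheory GRing.Theory Num.Theory.
Local Open Scope ring_scope.
Local Open Scope complex_scope.

Section ZC.
Variable R : realType.
Local Notation C := R[i].

Definition expi (t : R) : C := (cos t +i* sin t)%C.

(* xi_N^{x/2} = e^{- pi sqrt(-1) x / N}, for an integer x *)
Definition xi_half (N : nat) (x : int) : C :=
  expi (- (pi * x%:~R / N%:R)).

Definition xi_pow (N : nat) (x : int) : C := xi_half N (2 * x).

(* a sequence of length N is represented by a function nat -> C;
   only its values at 0 <= k < N matter *)
Definition seq_eq (N : nat) (x y : nat -> C) : Prop :=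
  forall k : nat, (k < N)%N -> x k = y k.

Definition zmodN (N : nat) (z : int) : nat := absz (z %% N%:Z)%Z.

Definition zc_seq (N : nat) (u l : int) : nat -> C :=
  fun k => xi_half N (u * ((k%:Z) ^+ 2 + (N %% 2)%:Z * k%:Z + 2 * l * k%:Z)).

Definition is_ZC (N : nat) (s : nat -> C) : Prop :=
  exists u l : int, coprimez u N%:Z /\ seq_eq N s (zc_seq N u l).

Definition elem_op (N : nat) (x y : nat -> C) : Prop :=
     (exists c : C, `|c| = 1 /\ seq_eq N y (fun k => c * x k))
  \/ (exists d : int, seq_eq N y (fun k => x (zmodN N (k%:Z + d))))
  \/ (exists a : int, coprimez a N%:Z /\
                      seq_eq N y (fun k => x (zmodN N (a * k%:Z))))
  \/ (exists l : int, seq_eq N y (fun k => xi_pow N (l * k%:Z) * x k))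
  \/ seq_eq N y (fun k => (x k)^*).

Inductive in_class (N : nat) (x : nat -> C) : (nat -> C) -> Prop :=
  | in_class_refl y : seq_eq N x y -> in_class N x y
  | in_class_step y z : in_class N x y -> elem_op N y z -> in_class N x z.

End ZC.

Definition quad_val (f2 f1 f0 : int) (k : nat) : int :=
  (f2 * (k%:Z) ^+ 2 + f1 * k%:Z + f0)%R.

Definition is_perm_poly (N : nat) (f2 f1 f0 : int) : Prop :=
  (forall i j : nat, (i < N)%N -> (j < N)%N ->
     zmodN N (quad_val f2 f1 f0 i) = zmodN N (quad_val f2 f1 f0 j) -> i = j)
  /\ (forall k : nat, (k < N)%N -> exists j : nat, (j < N)%N /\ zmodN N (quad_val f2 f1 f0 j) = k).

(* Main.v *)
Require Import Defs.
From HB Require Import structures.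
From mathcomp Require Import all_boot all_order all_algebra.
From mathcomp Require Import complex.
From mathcomp Require Import reals trigo.
From mathcomp Require Import ring lra zify.
Set Implicit Arguments.
Unset Strict Implicit.
Unset Printing Implicit Defensive.
Import Order.TTheory GRing.Theory Num.Theory.
Local Open Scope ring_scope.

Section XS.
Variable R : realType.
Local Notation C := R[i].

Lemma expiD (a b : R) : expi (a + b) = expi a * expi b.
Proof.
rewrite /expi cosD sinD /=; congr Complex; ring.
Qed.

Lemma expi_conj (a : R) : ((expi a)^*)%C = expi (- a).
Proof. by rewrite /expi /= cosN sinN. Qed.

Lemma expi0 : expi 0 = 1 :> C.
Proof. by rewrite /expi cos0 sin0. Qed.

Variable N : nat.
Hypothesis N0 : (0 < N)%N.

Definition X (x : int) : C := xi_half R N (2 * x).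

Lemma XD x y : X (x + y) = X x * X y.
Proof.
rewrite /X /xi_half -expiD; congr expi.
rewrite mulrDr !intrD !intrM; ring.
Qed.

Lemma X0 : X 0 = 1.
Proof. by rewrite /X /xi_half mulr0 mul0r oppr0 expi0. Qed.

Lemma XN x : X (- x) * X x = 1.
Proof. by rewrite -XD addNr X0. Qed.

Lemma XNN : X N%:Z = 1.
Proof.
have NR : (N%:R : R) != 0 by rewrite pnatr_eq0 -lt0n.
rewrite /X /xi_half /expi.
have -> : - (pi * (2 * N%:Z)%:~R / N%:R) = - (pi *+ 2) :> R.
  rewrite intrM mulrz_nat; congr (- _); field => //.
by rewrite cosN sinN cos2pi sin2pi oppr0.
Qed.

Lemma XmulN m : X (N%:Z * m) = 1.
Proof.
have Hn k : X (N%:Z * k%:Z) = 1.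
  elim: k => [|k IH]; first by rewrite mulr0 X0.
  by rewrite -addn1 PoszD mulrDr mulr1 XD IH XNN mulr1.
case: m => k; first exact: Hn.
rewrite NegzE mulrN.
by have := XN (N%:Z * k.+1%:Z); rewrite Hn mulr1.
Qed.

Lemma Xcongr x y : (N%:Z %| x - y)%Z -> X x = X y.
Proof.
case/dvdzP => q Hq.
have -> : x = y + N%:Z * q by rewrite mulrC -Hq; ring.
by rewrite XD XmulN mulr1.
Qed.

Lemma Xeq1 x : X x = 1 -> (N%:Z %| x)%Z.
Proof.
move=> Hx.
have NZ : N%:Z != 0 by rewrite eqz_nat -lt0n.
set r := (x %% N%:Z)%Z.
have r0 : 0 <= r by apply: modz_ge0.
have rN : r < N%:Z by apply: ltz_pmod; rewrite ltz_nat.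
have Xr : X r = 1.
  rewrite -Hx; symmetry; apply: Xcongr.
  rewrite /r; have -> : x - (x %% N%:Z)%Z = (x %/ N%:Z)%Z * N%:Z by rewrite {1}(divz_eq x N%:Z) addrK.
  by apply: dvdz_mull; exact: dvdzz.
suff r00 : r = 0.
  apply/dvdz_mod0P; exact: r00.
apply/eqP; rewrite eq_le r0 andbT leNgt; apply/negP => rpos.
have NR : (0 : R) < N%:R by rewrite ltr0n.
set y : R := pi * r%:~R / N%:R.
have Hc : cos (y *+ 2) = 1.
  move: Xr; rewrite /X /xi_half /expi => /(congr1 (@complex.Re R)) /=.
  rewrite cosN => <-; congr cos; rewrite /y intrM mulr2n; ring.
have Hs : sin y = 0.
  have : sin y ^+ 2 = 0.
    by rewrite sin2cos2; move: Hc; rewrite cos_mulr2n => H; lra.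
  by move/eqP; rewrite expf_eq0 /= => /eqP.
have Hy : 0 < y < pi.
  apply/andP; split.
    rewrite /y; apply: divr_gt0 => //; apply: mulr_gt0; first exact: pi_gt0.
    by rewrite ltr0z.
  rewrite /y ltr_pdivrMr // ltr_pM2l ?pi_gt0 // -mulrz_nat ltr_int natz; exact: rN.
have Hpos := sin_gt0_pi Hy.
by rewrite Hs ltxx in Hpos.
Qed.


Lemma zmodN_eq z : (zmodN N z)%:Z = (z %% N%:Z)%Z.
Proof.
have NZ : N%:Z != 0 by rewrite eqz_nat -lt0n.
by rewrite /zmodN gez0_abs // modz_ge0.
Qed.

Lemma zmodN_lt z : (zmodN N z < N)%N.
Proof.
rewrite -ltz_nat zmodN_eq ltz_pmod // ltz_nat //.
Qed.

Lemma zmodN_dvd z : (N%:Z %| (zmodN N z)%:Z - z)%Z.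
Proof.
rewrite zmodN_eq.
have -> : (z %% N%:Z)%Z - z = - ((z %/ N%:Z)%Z * N%:Z) by rewrite {2}(divz_eq z N%:Z); ring.
by rewrite rpredN; apply: dvdz_mull; exact: dvdzz.
Qed.

Lemma dvd_poly (A B m z : int) : (N%:Z %| m - z)%Z ->
  (N%:Z %| (A * m ^+ 2 + B * m) - (A * z ^+ 2 + B * z))%Z.
Proof.
move=> H.
have -> : (A * m ^+ 2 + B * m) - (A * z ^+ 2 + B * z) = (m - z) * (A * (m + z) + B) by ring.
exact: dvdz_mulr.
Qed.

Lemma X_poly (A B m z : int) : (N%:Z %| m - z)%Z ->
  X (A * m ^+ 2 + B * m) = X (A * z ^+ 2 + B * z).
Proof. by move=> H; apply: Xcongr; apply: dvd_poly. Qed.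

Definition Inv (y : nat -> C) := exists c a b, coprimez a N%:Z /\ forall k, (k < N)%N -> y k = c * X (a * k%:Z ^+ 2 + b * k%:Z).

Lemma X_conj x : ((X x)^*)%C = X (- x).
Proof.
rewrite /X /xi_half expi_conj; congr expi.
rewrite !intrM intrN; ring.
Qed.

Lemma conj_mulX (c : C) x : ((c * X x)^*)%C = (c^*)%C * X (- x).
Proof. by rewrite -X_conj; apply: rmorphM. Qed.

Lemma Inv_step y z : Inv y -> elem_op N y z -> Inv z.
Proof.
move=> [c [a [b [ca Hy]]]].
case=> [[c0 [_ H]]|[[d H]|[[a0 [ca0 H]]|[[l0 H]|H]]]].
- exists (c0 * c), a, b; split => // k kN.
  by rewrite H // Hy // mulrA.
- exists (c * X (a * d ^+ 2 + b * d)), a, (2 * a * d + b); split => // k kN.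
  rewrite H // Hy ?zmodN_lt // (X_poly _ _ (zmodN_dvd _)) -mulrA -XD.
  congr (_ * X _); ring.
- exists c, (a * a0 ^+ 2), (b * a0); split.
    by rewrite coprimezMl ca coprimezXl.
  move=> k kN; rewrite H // Hy ?zmodN_lt // (X_poly _ _ (zmodN_dvd _)).
  congr (_ * X _); ring.
- exists c, a, (b + l0); split => // k kN.
  rewrite H // Hy // mulrCA -XD /X /xi_pow; congr (_ * xi_half _ _ _); ring.
- exists (c^*)%C, (- a), (- b); split; first by rewrite coprimeNz.
  move=> k kN; rewrite H // Hy // conj_mulX; congr (_ * X _); ring.
Qed.

Lemma Inv_seq_eq y z : Inv y -> seq_eq N y z -> Inv z.
Proof.
move=> [c [a [b [ca Hy]]]] H; exists c, a, b; split => // k kN.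
by rewrite -H // Hy.
Qed.

Variable h : int.
Hypothesis Hh : 2 * h = N%:Z + 1.
Hypothesis Nodd : odd N.

Lemma coprime_h : coprimez h N%:Z.
Proof.
apply/coprimezP; exists (2, -1) => /=; rewrite Hh; ring.
Qed.

Lemma zc_X (u l : int) (k : nat) :
  zc_seq R N u l k = X (h * u * k%:Z ^+ 2 + (h * u + u * l) * k%:Z).
Proof.
have [T HT] : exists T : int, k%:Z ^+ 2 + k%:Z = 2 * T.
  exists ((k * k.+1)./2)%N%:Z.
  have := halfK (k * k.+1); rewrite oddM /= andbN subn0 => E.
  have -> : k%:Z ^+ 2 + k%:Z = (k * k.+1)%N%:Z by rewrite PoszM intS; ring.
  by rewrite -{1}E -muln2 PoszM mulrC.
have Nm : (N %% 2)%N = 1%N by rewrite modn2 Nodd.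
rewrite /zc_seq Nm.
have -> : u * (k%:Z ^+ 2 + 1%N%:Z * k%:Z + 2 * l * k%:Z) = 2 * (u * T + u * l * k%:Z).
  have -> : u * (k%:Z ^+ 2 + 1%N%:Z * k%:Z + 2 * l * k%:Z) = u * (k%:Z ^+ 2 + k%:Z) + 2 * u * l * k%:Z by ring.
  rewrite HT; ring.
rewrite -/(X _); apply: Xcongr.
apply/dvdzP; exists (- (u * T)).
apply: (@mulfI _ 2); first by [].
have -> : 2 * (u * T + u * l * k%:Z - (h * u * k%:Z ^+ 2 + (h * u + u * l) * k%:Z))
  = u * (2 * T) - 2 * h * u * (k%:Z ^+ 2 + k%:Z) by ring.
rewrite HT Hh; ring.
Qed.

Lemma Inv_ZC t : is_ZC N t -> Inv t.
Proof.
move=> [u [l [cu Ht]]].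
exists 1, (h * u), (h * u + u * l); split.
  by rewrite coprimezMl coprime_h cu.
by move=> k kN; rewrite Ht // zc_X mul1r.
Qed.

Lemma Inv_class t y : is_ZC N t -> in_class N t y -> Inv y.
Proof.
move=> zt; elim => [z H|z z' _ IH He].
  exact: Inv_seq_eq (Inv_ZC zt) H.
exact: Inv_step IH He.
Qed.

Lemma diff3 (D : nat -> int) (c : C) : (4 < N)%N ->
  (forall k, (k < N)%N -> X (D k) = c) ->
  (N%:Z %| D 3%N - 3 * D 2%N + 3 * D 1%N - D 0%N)%Z /\ (N%:Z %| D 4%N - 3 * D 3%N + 3 * D 2%N - D 1%N)%Z.
Proof.
move=> N4 HD.
have E k : (k < N)%N -> (N%:Z %| D k - D 0%N)%Z.
  move=> kN; apply: Xeq1.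
  rewrite XD HD // -(HD 0%N) //.
  by rewrite mulrC XN.
have E1 := E 1%N ltac:(lia); have E2 := E 2%N ltac:(lia).
have E3 := E 3%N ltac:(lia); have E4 := E 4%N ltac:(lia).
split.
  have -> : D 3%N - 3 * D 2%N + 3 * D 1%N - D 0%N =
    (D 3%N - D 0%N) - 3 * (D 2%N - D 0%N) + 3 * (D 1%N - D 0%N) by ring.
  by apply: rpredD; [apply: rpredB => //|]; apply: dvdz_mull.
have -> : D 4%N - 3 * D 3%N + 3 * D 2%N - D 1%N =
  (D 4%N - D 0%N) - 3 * (D 3%N - D 0%N) + 3 * (D 2%N - D 0%N) - (D 1%N - D 0%N) by ring.
by apply: rpredB => //; apply: rpredD; [apply: rpredB => //|]; apply: dvdz_mull.
Qed.

End XS.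
Lemma prime_ndvd12 p : prime p -> (5 <= p)%N -> ~~ (p %| 12)%N.
Proof.
move=> pp p5; apply/negP => H.
have : (p %| 2 * (2 * 3))%N by [].
rewrite !Euclid_dvdM // => /orP[|/orP[]] /dvdn_leq => /(_ isT); lia.
Qed.

Lemma coprime_pow_z (p n : nat) (z : int) : prime p -> ~~ (p%:Z %| z)%Z ->
  coprimez z (p ^ n)%N%:Z.
Proof.
move=> pp H; rewrite coprimezE /= coprimeXr //.
by rewrite coprime_sym prime_coprime.
Qed.

Lemma nt_contra (p n : nat) (w f2 f1 f0 : int) :
  prime p -> (5 <= p)%N -> (0 < n)%N ->
  coprimez w (p ^ n)%N%:Z ->
  ((p ^ n)%N%:Z %| 12 * w * f2 * (3 * f2 + f1))%Z ->
  ((p ^ n)%N%:Z %| 12 * w * f2 * (5 * f2 + f1))%Z ->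
  ~ ((p ^ n)%N%:Z %| f2)%Z ->
  (exists j : nat, ((p ^ n)%N%:Z %| quad_val f2 f1 f0 j - (f0 + 1)))%Z -> False.
Proof.
move=> pp p5 n0 cw H3 H5 nf2 [j Hj].
set N := (p ^ n)%N%:Z in H3 H5 nf2 Hj cw.
have c12 : coprimez 12 N.
  by rewrite /N coprime_pow_z //; exact: prime_ndvd12.
have c2 : coprimez 2 N.
  by rewrite /N coprime_pow_z // /dvdz /=; apply/negP => /dvdn_leq; lia.
have c12w : coprimez (12 * w) N by rewrite coprimezMl c12 cw.
have Hsq : (N %| f2 * f2)%Z.
  have : (N %| (12 * w) * (2 * (f2 * f2)))%Z.
    have -> : (12 * w) * (2 * (f2 * f2)) =
      12 * w * f2 * (5 * f2 + f1) - 12 * w * f2 * (3 * f2 + f1) by ring.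
    exact: rpredB.
  rewrite Gauss_dvdzr; last by rewrite coprimez_sym.
  by rewrite Gauss_dvdzr // coprimez_sym.
have Hf1 : (N %| f2 * f1)%Z.
  have H3' : (N %| f2 * (3 * f2 + f1))%Z.
    move: H3; rewrite -!mulrA Gauss_dvdzr; last by rewrite coprimez_sym.
    by rewrite Gauss_dvdzr // coprimez_sym.
  have -> : f2 * f1 = f2 * (3 * f2 + f1) - 3 * (f2 * f2) by ring.
  by apply: rpredB => //; apply: dvdz_mull.
have pf2 : (p%:Z %| f2)%Z.
  apply/negPn/negP => np; apply: nf2.
  by move: Hsq; rewrite Gauss_dvdzl // coprimez_sym /N coprime_pow_z.
have pf1 : (p%:Z %| f1)%Z.
  apply/negPn/negP => np; apply: nf2.
  by move: Hf1; rewrite Gauss_dvdzl // coprimez_sym /N coprime_pow_z.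
have pN : (p%:Z %| N)%Z by apply: (dvdn_exp n0 (dvdnn p)).
have pq := dvdz_trans pN Hj.
have : (p%:Z %| 1)%Z.
  have E : (j%:Z ^+ 2 * f2 + j%:Z * f1) - (quad_val f2 f1 f0 j - (f0 + 1)) = 1.
    rewrite /quad_val; ring.
  suff : (p%:Z %| (j%:Z ^+ 2 * f2 + j%:Z * f1) - (quad_val f2 f1 f0 j - (f0 + 1)))%Z by rewrite E.
  by apply: rpredB => //; apply: rpredD; apply: dvdz_mull.
rewrite dvdz1 /= => /eqP p1.
by move: pp; rewrite p1.
Qed.

Theorem proposition3 (R : realType) (p n : nat) (u l f2 f1 f0 : int)
    (sigma : nat -> nat) :
  let N := (p ^ n)%N in
  prime p -> (5 <= p)%N -> (2 <= n)%N ->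
  coprimez u N%:Z ->
  is_perm_poly N f2 f1 f0 ->
  zmodN N f2 <> 0%N ->
  (* sigma is the inverse permutation pi^{-1} of Z_N *)
  (forall k : nat, (k < N)%N ->
     (sigma k < N)%N /\ zmodN N (quad_val f2 f1 f0 (sigma k)) = k) ->
  let s := zc_seq R N u l in
  (forall t : nat -> R[i], is_ZC N t ->
     ~ in_class N t (fun k => s (zmodN N (quad_val f2 f1 f0 k)))) /\
  (forall t : nat -> R[i], is_ZC N t ->
     ~ in_class N t (fun k => s (sigma k))).
Proof.
move=> N pp p5 n2 cu [inj surj] f2nz Hsig s.
have n0 : (0 < n)%N by lia.
have N0 : (0 < N)%N by rewrite /N expn_gt0 prime_gt0.
have N4 : (4 < N)%N.
  have := dvdn_leq N0 (dvdn_exp n0 (dvdnn p)); rewrite -/N; lia.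
have Nodd : odd N.
  rewrite /N oddX; case: (even_prime pp) => [p2|->]; last by rewrite orbT.
  by move: p5; rewrite p2.
set h : int := (N./2).+1%:Z.
have Hh : 2 * h = N%:Z + 1.
  have H : (2 * (N./2).+1 = N + 1)%N.
    have := odd_double_half N; rewrite Nodd -muln2 /=. lia.
  by rewrite /h -[2]/(2%N%:Z) -PoszM H PoszD.
have nf2 : ~ (N%:Z %| f2)%Z.
  by move=> /dvdz_mod0P H; apply: f2nz; rewrite /zmodN H.
have Hsurj : exists j : nat, (N%:Z %| quad_val f2 f1 f0 j - (f0 + 1))%Z.
  have [j [jN Hj]] := surj _ (zmodN_lt N0 (f0 + 1)).
  exists j.
  have -> : quad_val f2 f1 f0 j - (f0 + 1) =
    ((zmodN N (f0 + 1))%:Z - (f0 + 1)) - ((zmodN N (quad_val f2 f1 f0 j))%:Z - quad_val f2 f1 f0 j).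
    rewrite Hj; ring.
  by apply: rpredB; apply: zmodN_dvd.
have cw : coprimez (h * u) N%:Z by rewrite coprimezMl (coprime_h Hh) cu.
split.
- move=> t zt Hc.
  have [c [a [b [ca Hy]]]] := Inv_class N0 Hh Nodd zt Hc.
  pose D (k : nat) : int := (h * u * (quad_val f2 f1 f0 k) ^+ 2 + (h * u + u * l) * quad_val f2 f1 f0 k)
     - (a * k%:Z ^+ 2 + b * k%:Z).
  have HD : forall k, (k < N)%N -> X R N (D k) = c.
    move=> k kN; have := Hy k kN.
    rewrite /s (zc_X R N0 Hh Nodd) (X_poly R N0 _ _ (zmodN_dvd N0 _)) => E.
    by rewrite /D XD E -mulrA (mulrC (X _ _ _)) XN mulr1.
  have [d3 d4] := diff3 N0 Hh Nodd N4 HD.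
  apply: (nt_contra (w := h * u) (f0 := f0) pp p5 n0 cw _ _ nf2 Hsurj).
    have <- : D 3%N - 3 * D 2%N + 3 * D 1%N - D 0%N = 12 * (h * u) * f2 * (3 * f2 + f1).
      rewrite /D /quad_val; ring.
    exact: d3.
  have <- : D 4%N - 3 * D 3%N + 3 * D 2%N - D 1%N = 12 * (h * u) * f2 * (5 * f2 + f1).
    rewrite /D /quad_val; ring.
  exact: d4.
- move=> t zt Hc.
  have [c [a [b [ca Hy]]]] := Inv_class N0 Hh Nodd zt Hc.
  pose D (j : nat) : int := (h * u * j%:Z ^+ 2 + (h * u + u * l) * j%:Z)
     - (a * (quad_val f2 f1 f0 j) ^+ 2 + b * quad_val f2 f1 f0 j).
  have HD : forall j, (j < N)%N -> X R N (D j) = c.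
    move=> j jN.
    set k := zmodN N (quad_val f2 f1 f0 j).
    have kN : (k < N)%N by apply: zmodN_lt.
    have sk : sigma k = j.
      have [skN Hk] := Hsig k kN.
      by apply: inj => //; rewrite Hk.
    have := Hy k kN; rewrite /= sk.
    rewrite /s (zc_X R N0 Hh Nodd) (X_poly R N0 _ _ (zmodN_dvd N0 _)) => E.
    by rewrite /D XD E -mulrA (mulrC (X _ _ _)) XN mulr1.
  have [d3 d4] := diff3 N0 Hh Nodd N4 HD.
  have cwa : coprimez (- a) N%:Z by rewrite coprimeNz.
  apply: (nt_contra (w := - a) (f0 := f0) pp p5 n0 cwa _ _ nf2 Hsurj).
    have <- : D 3%N - 3 * D 2%N + 3 * D 1%N - D 0%N = 12 * (- a) * f2 * (3 * f2 + f1).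
      rewrite /D /quad_val; ring.
    exact: d3.
  have <- : D 4%N - 3 * D 3%N + 3 * D 2%N - D 1%N = 12 * (- a) * f2 * (5 * f2 + f1).
    rewrite /D /quad_val; ring.
  exact: d4.
Qed.
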